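(* Let $(G,\prec)$ be a POP-graph and let $v$ be an internal vertex of $G$ that is maximal, i.e. there is no internal vertex $v'\neq v$ with $v\to v'$. Then (1) $O(v)\subseteq O(G)$ and $O(v)$ is an interval of $(E(G),\prec)$; in particular $O(v)$ is an interval of $(O(G),\prec)$. (2) For every $h\in I(v)$ and $o\in O(G)\setminus O(v)$: $o\prec h$ iff $o\prec\min O(v)$, and $h\prec o$ iff $\max O(v)\prec o$.
   Context: A progressive graph is a finite directed acyclic graph (parallel edges allowed) in which every source and every sink has degree one; degree-one vertices are boundary vertices, the others internal. $O(G)$ is the set of output edges (edges whose terminal vertex is a boundary vertex). For a vertex $v$, $I(v)$ and $O(v)$ are its incoming and outgoing edges. For edges write $e\to e'$ if $e\neq e'$ and there is a directed path whose first edge is $e$ and last edge is $e'$; for vertices $v\to v'$ means there is a directed path from $v$ to $v'$. A planar order on $G$ is a linear order $\prec$ on $E(G)$ such that (P1) $e_1\to e_2$ implies $e_1\prec e_2$; (P2) if $e_1\prec e_2\prec e_3$ and $e_1\to e_3$ then $e_1\to e_2$ or $e_2\to e_3$. A POP-graph is a progressive graph with a planar order. An interval of a linearly ordered set $(S,\prec)$ is a subset of the form $\{s: a\preceq s\preceq b\}$. *)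

(* Defs.v *)
From mathcomp Require Import all_boot.
Set Implicit Arguments. Unset Strict Implicit. Unset Printing Implicit Defensive.

(* A finite directed multigraph: vertex type V, edge type E, each edge e goes
   from (src e) to (tgt e). Parallel edges are allowed. *)
Section Graph.
Variables (V E : finType) (src tgt : E -> V).

Definition vadj : rel V := fun a b => [exists e, (src e == a) && (tgt e == b)].
Definition vreach (a b : V) : bool := connect vadj a b.

Definition esucc : rel E := fun e f => tgt e == src f.
Definition epath (e f : E) : bool := (e != f) && connect esucc e f.

Definition in_edges (v : V) : {set E} := [set e | tgt e == v].
Definition out_edges (v : V) : {set E} := [set e | src e == v].
Definition degree (v : V) : nat := #|in_edges v| + #|out_edges v|.

Definition is_source (v : V) : bool := #|in_edges v| == 0.
Definition is_sink (v : V) : bool := #|out_edges v| == 0.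

Definition boundary (v : V) : bool := degree v == 1.
Definition internal (v : V) : bool := ~~ boundary v.

Definition acyclic : Prop := forall e : E, ~~ vreach (tgt e) (src e).

Definition progressive : Prop :=
  [/\ acyclic,
      forall v, is_source v -> degree v = 1 &
      forall v, is_sink v -> degree v = 1].

Definition output_edges : {set E} := [set e | boundary (tgt e)].

Definition strict_linear (prec : rel E) : Prop :=
  [/\ irreflexive prec, transitive prec &
      forall e f, e != f -> prec e f || prec f e].

Definition planar_order (prec : rel E) : Prop :=
  [/\ strict_linear prec,
      forall e1 e2, epath e1 e2 -> prec e1 e2 &
      forall e1 e2 e3, prec e1 e2 -> prec e2 e3 -> epath e1 e3 ->
                   epath e1 e2 \/ epath e2 e3].

Definition pleq (prec : rel E) (e f : E) : bool := (e == f) || prec e f.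

Definition is_interval_in (prec : rel E) (T S : {set E}) : Prop :=
  exists a b, [/\ a \in T, b \in T &
    forall s, s \in T -> (s \in S <-> pleq prec a s && pleq prec s b)].

End Graph.

(* Main.v *)
Require Import Defs.
From mathcomp Require Import all_boot.
From mathcomp Require Import zify.

Lemma conn_first {T : finType} {r : rel T} {x y} :
  connect r x y -> x != y -> exists2 z, r x z & connect r z y.
Proof.
move=> /connectP [[|z p] /= Hp ->]; first by rewrite eqxx.
case/andP: Hp => Hxz Hp _; exists z => //; by apply/connectP; exists p.
Qed.

Lemma conn_last {T : finType} {r : rel T} {x y} :
  connect r x y -> x != y -> exists2 z, connect r x z & r z y.
Proof.
move=> /connectP [p Hp ->]; elim/last_ind: p Hp => [|q z _]; first by rewrite /= eqxx.
rewrite rcons_path last_rcons => /andP[Hq Hz] _.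
exists (last x q) => //; by apply/connectP; exists q.
Qed.

Theorem lemma3p4 (V E : finType) (src tgt : E -> V) (prec : rel E)
  (HG : progressive src tgt) (HP : planar_order src tgt prec)
  (v : V) (Hv : internal src tgt v)
  (Hmax : forall v', internal src tgt v' -> v' != v -> ~~ vreach src tgt v v') :
  [/\ out_edges src v \subset output_edges src tgt,
      is_interval_in prec [set: E] (out_edges src v),
      is_interval_in prec (output_edges src tgt) (out_edges src v) &
      exists m M, [/\ m \in out_edges src v, M \in out_edges src v,
        (forall e, e \in out_edges src v -> pleq prec m e && pleq prec e M) &
        (forall h o, h \in in_edges tgt v ->
           o \in output_edges src tgt :\: out_edges src v ->
           (prec o h = prec o m) /\ (prec h o = prec M o))]].
Proof.
case: HG => Hacyc Hsrc Hsnk.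
case: HP => [[Hirr Htr Htot] HP1 HP2].
have [h0 Hh0] : exists h, h \in in_edges tgt v.
  case: (set_0Vmem (in_edges tgt v)) => [H0|[h Hh]]; last by exists h.
  have := Hsrc v; rewrite /is_source H0 cards0 => /(_ isT) Hd.
  by move: Hv; rewrite /internal /boundary Hd.
have [m0 Hm0] : exists e, e \in out_edges src v.
  case: (set_0Vmem (out_edges src v)) => [H0|[h Hh]]; last by exists h.
  have := Hsnk v; rewrite /is_sink H0 cards0 => /(_ isT) Hd.
  by move: Hv; rewrite /internal /boundary Hd.
have sink_out : forall e, boundary src tgt (tgt e) -> out_edges src (tgt e) = set0.
  move=> e; rewrite /boundary /degree => /eqP Hd.
  have : 0 < #|in_edges tgt (tgt e)| by apply/card_gt0P; exists e; rewrite inE.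
  move=> Hp; apply/eqP; rewrite -cards_eq0; apply/eqP; lia.
have outb : forall e, e \in out_edges src v -> boundary src tgt (tgt e).
  move=> e; rewrite inE => /eqP He.
  case Hb: (boundary src tgt (tgt e)) => //.
  have Hi : internal src tgt (tgt e) by rewrite /internal Hb.
  case: (eqVneq (tgt e) v) => [Heq|Hneq].
    by have := Hacyc e; rewrite Heq He /vreach connect0.
  have := Hmax _ Hi Hneq; rewrite /vreach.
  have -> : connect (vadj src tgt) v (tgt e).
    by apply: connect1; apply/existsP; exists e; rewrite He !eqxx.
  done.
have L1 : forall h s, h \in in_edges tgt v -> epath src tgt h s -> s \in out_edges src v.
  move=> h s; rewrite inE => /eqP Hh /andP[Hne Hc].
  case: (conn_first Hc Hne) => z Hz Hzs.
  have Zv : z \in out_edges src v by rewrite inE -(eqP Hz) Hh.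
  case: (eqVneq z s) => [<-//|Hzs'].
  case: (conn_first Hzs Hzs') => y Hy _.
  have : y \in out_edges src (tgt z) by rewrite inE eq_sym.
  by rewrite sink_out ?inE // outb.
have L2 : forall o x, o \in output_edges src tgt -> ~~ epath src tgt o x.
  move=> o x; rewrite inE => Ho; apply/negP => /andP[Hne Hc].
  case: (conn_first Hc Hne) => z Hz _.
  have : z \in out_edges src (tgt o) by rewrite inE eq_sym.
  by rewrite sink_out // inE.
pose rank e := #|[set f | prec f e]|.
have rank_lt : forall a b, prec a b -> rank a < rank b.
  move=> a b Hab; apply: proper_card; apply/properP; split.
    by apply/subsetP => f; rewrite !inE => Hf; exact: Htr _ _ _ Hf Hab.
  by exists a; rewrite !inE ?Hab ?Hirr.
have [m Hm Hmmin] : exists2 m, m \in out_edges src v &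
    forall e, e \in out_edges src v -> rank m <= rank e.
  by case: (arg_minnP rank Hm0) => m1 Hm1 H; exists m1.
have [M HM HMmax] : exists2 M, M \in out_edges src v &
    forall e, e \in out_edges src v -> rank e <= rank M.
  by case: (arg_maxnP rank Hm0) => m1 Hm1 H; exists m1.
have minmax : forall e, e \in out_edges src v -> pleq prec m e && pleq prec e M.
  move=> e He; apply/andP; split; rewrite /pleq.
    case: (eqVneq m e) => //= Hne; case/orP: (Htot _ _ Hne) => // Hem.
    by have := rank_lt _ _ Hem; have := Hmmin _ He; lia.
  case: (eqVneq e M) => //= Hne; case/orP: (Htot _ _ Hne) => // Hem.
  by have := rank_lt _ _ Hem; have := HMmax _ He; lia.
have hne : forall h e, h \in in_edges tgt v -> e \in out_edges src v -> h != e.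
  move=> h e Hh He; apply/eqP => Heq; subst e.
  move: Hh (outb _ He) Hv; rewrite inE /internal => /eqP -> ->. done.
have epm : forall h e, h \in in_edges tgt v -> e \in out_edges src v -> epath src tgt h e.
  move=> h e Hh He; rewrite /epath hne //=; apply: connect1.
  by move: Hh He; rewrite !inE /esucc => /eqP -> /eqP ->.
have Hsub : out_edges src v \subset output_edges src tgt.
  by apply/subsetP => e He; rewrite inE outb.
have Hiff : forall s, s \in out_edges src v <-> pleq prec m s && pleq prec s M.
  move=> s; split; first exact: minmax.
  rewrite /pleq; case: (eqVneq m s) => [<-//|Hms] /=.
  case: (eqVneq s M) => [->//|HsM] /= /andP[Hms' HsM'].
  case Hs: (s \in out_edges src v) => //.
  have HhM := epm _ _ Hh0 HM.
  have Hhs : prec h0 s := Htr _ _ _ (HP1 _ _ (epm _ _ Hh0 Hm)) Hms'.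
  case: (HP2 _ _ _ Hhs HsM' HhM) => [/(L1 _ _ Hh0)|/andP[_ Hc]]; first by rewrite Hs.
  case: (conn_last Hc HsM) => z Hsz Hz.
  have Hsm : epath src tgt s m.
    rewrite /epath eq_sym Hms /=; apply: connect_trans Hsz (connect1 _).
    by move: HM Hm Hz; rewrite !inE /esucc => /eqP -> /eqP ->.
  by have := Hirr m; rewrite (Htr _ _ _ Hms' (HP1 _ _ Hsm)).
split => //.
- by exists m, M; split => // s _; exact: Hiff.
- exists m, M; split; try exact: (subsetP Hsub).
  by move=> s _; exact: Hiff.
exists m, M; split => //.
move=> h o Hh; rewrite in_setD => /andP[HoO Ho].
have Hoh : o != h.
  apply/eqP => Heq; subst o; move: Hh Ho Hv; rewrite !inE /internal => /eqP -> ->; done.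
have Hho : ~~ epath src tgt h o by apply/negP => /(L1 _ _ Hh); rewrite (negbTE HoO).
have Hhm := HP1 _ _ (epm _ _ Hh Hm).
have HhM := HP1 _ _ (epm _ _ Hh HM).
split.
  apply/idP/idP => [Hoh'|Hom]; first exact: Htr _ _ _ Hoh' Hhm.
  case/orP: (Htot _ _ Hoh) => // Hh'.
  case: (HP2 _ _ _ Hh' Hom (epm _ _ Hh Hm)) => H; first by rewrite H in Hho.
  by have := L2 o m Ho; rewrite H.
apply/idP/idP => [Hh'|HMo]; last exact: Htr _ _ _ HhM HMo.
have HoM : M != o by apply/eqP => HMo; subst o; rewrite HM in HoO.
case/orP: (Htot _ _ HoM) => // HoM'.
case: (HP2 _ _ _ Hh' HoM' (epm _ _ Hh HM)) => H; first by rewrite H in Hho.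
by have := L2 o M Ho; rewrite H.
Qed.
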